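(* Let $k\in\mathbb N$ and $n\in\mathbb Z^+$, with $a_j$, $\Phi_m,\Psi_m$, $\Phi_n^{(k)},\Psi_n^{(k)}$ as in the context. Then $$2z^k\prod_{j=0}^{k-1}(1-|a_j|^2)\begin{pmatrix}\Phi_n^{(k)}&\Psi_n^{(k)}\\ \Phi_n^{(k)*}&-\Psi_n^{(k)*}\end{pmatrix}=\begin{pmatrix}\Phi_{n+k}&\Psi_{n+k}\\ \Phi_{n+k}^*&-\Psi_{n+k}^*\end{pmatrix}\begin{pmatrix}\Psi_k^*+\Psi_k&\Psi_k^*-\Psi_k\\ \Phi_k^*-\Phi_k&\Phi_k^*+\Phi_k\end{pmatrix}.$$
   Context: $\mathbb N=\{1,2,\dots\}$, $\mathbb Z^+=\mathbb N\cup\{0\}$. For a polynomial $p$ indexed by $m$, $p^*(z)=z^m\overline{p(1/\bar z)}$ (reversal with respect to degree $m$; e.g. $\Phi_n^{(k)*}$ is taken with respect to degree $n$). Let $\sigma$ be a positive Borel measure on $[0,2\pi)$ with infinite support; $\Phi_m$ the monic degree-$m$ polynomials orthogonal with respect to $\sigma$ on the unit circle; $a_m=-\overline{\Phi_{m+1}(0)}$, so $|a_m|<1$, $\Phi_0=1$, $\Phi_{m+1}=z\Phi_m-\overline{a_m}\Phi_m^*$; $\Psi_0=1$, $\Psi_{m+1}=z\Psi_m+\overline{a_m}\Psi_m^*$. The $k$th associated polynomials: $\Phi_0^{(k)}=\Psi_0^{(k)}=1$, $\Phi_{m+1}^{(k)}=z\Phi_m^{(k)}-\overline{a_{m+k}}\,\Phi_m^{(k)*}$,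 $\Psi_{m+1}^{(k)}=z\Psi_m^{(k)}+\overline{a_{m+k}}\,\Psi_m^{(k)*}$. *)

(* Defs.v *)
From HB Require Import structures.
From mathcomp Require Import all_boot all_order all_algebra.
From mathcomp Require Import reals.
From mathcomp Require Import complex.
Set Implicit Arguments. Unset Strict Implicit. Unset Printing Implicit Defensive.
Import Order.TTheory GRing.Theory Num.Theory.
Local Open Scope ring_scope.

(* p^* reversal with respect to degree m: p^*(z) = z^m conj(p(1/conj z)),
   i.e. the coefficient of z^i in p^* is the conjugate of the coefficient
   of z^(m-i) in p (0 <= i <= m). *)
Definition rev_poly (R : realType) (m : nat) (p : {poly R[i]}) : {poly R[i]} :=
  \poly_(i < m.+1) (p`_(m - i))^*.

Fixpoint Phi (R : realType) (a : nat -> R[i]) (m : nat) : {poly R[i]} :=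
  match m with
  | 0 => 1
  | m'.+1 => 'X * Phi a m' - ((a m')^*)%:P * rev_poly m' (Phi a m')
  end.

Fixpoint Psi (R : realType) (a : nat -> R[i]) (m : nat) : {poly R[i]} :=
  match m with
  | 0 => 1
  | m'.+1 => 'X * Psi a m' + ((a m')^*)%:P * rev_poly m' (Psi a m')
  end.

Fixpoint Phi_assoc (R : realType) (a : nat -> R[i]) (k m : nat) : {poly R[i]} :=
  match m with
  | 0 => 1
  | m'.+1 => 'X * Phi_assoc a k m' - ((a (m' + k)%N)^*)%:P * rev_poly m' (Phi_assoc a k m')
  end.

Fixpoint Psi_assoc (R : realType) (a : nat -> R[i]) (k m : nat) : {poly R[i]} :=
  match m with
  | 0 => 1
  | m'.+1 => 'X * Psi_assoc a k m' + ((a (m' + k)%N)^*)%:P * rev_poly m' (Psi_assoc a k m')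
  end.

Definition mx22 (T : Type) (x y z w : T) : 'M[T]_2 :=
  \matrix_(i < 2, j < 2)
    if i == ord0 then (if j == ord0 then x else y) else (if j == ord0 then z else w).

(* Main.v *)
Require Import Defs.
From HB Require Import structures.
From mathcomp Require Import all_boot all_order all_algebra.
From mathcomp Require Import reals complex.
From mathcomp Require Import ring zify.
Import Order.TTheory GRing.Theory Num.Theory.
Local Open Scope ring_scope.

Section S.
Variable R : realType.
Implicit Types p q : {poly R[i]}.

Lemma rev_add m p q : rev_poly m (p + q) = rev_poly m p + rev_poly m q.
Proof.
apply/polyP => i; rewrite coefD !coef_poly; case: ifP => _; last by rewrite addr0.
by rewrite coefD rmorphD.
Qed.

Lemma rev_opp m p : rev_poly m (- p) = - rev_poly m p.
Proof.
apply/polyP => i; rewrite coefN !coef_poly; case: ifP => _; last by rewrite oppr0.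
by rewrite coefN rmorphN.
Qed.

Lemma rev_sub m p q : rev_poly m (p - q) = rev_poly m p - rev_poly m q.
Proof. by rewrite rev_add rev_opp. Qed.

Lemma rev_C m c p : rev_poly m (c%:P * p) = (c^*)%:P * rev_poly m p.
Proof.
apply/polyP => i; rewrite coefCM !coef_poly; case: ifP => _; last by rewrite mulr0.
by rewrite coefCM rmorphM.
Qed.

Lemma rev_X m p : rev_poly m.+1 ('X * p) = rev_poly m p.
Proof.
apply/polyP => i; rewrite !coef_poly coefXM.
case: (ltnP i m.+1) => h1.
  have -> : (i < m.+2)%N by lia.
  have -> : (m.+1 - i == 0)%N = false by apply/eqP; lia.
  by have -> : (m.+1 - i).-1 = (m - i)%N by lia.
case: ifP => // h2.
have -> : (m.+1 - i == 0)%N by apply/eqP; lia.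
by rewrite rmorph0.
Qed.

Lemma rev_rev m p : (size p <= m.+1)%N -> rev_poly m.+1 (rev_poly m p) = 'X * p.
Proof.
move=> hs; apply/polyP => i; rewrite !coef_poly coefXM.
case: (ltnP i m.+2) => h1.
  case: (i =P 0)%N => [->|h0].
    by rewrite subn0 ltnn rmorph0.
  have -> : (m.+1 - i < m.+1)%N by lia.
  rewrite conjCK.
  by have -> : (m - (m.+1 - i))%N = i.-1 by lia.
have -> : (i == 0)%N = false by apply/eqP; lia.
rewrite nth_default //; move: h1 hs; case: i => //= j; lia.
Qed.

Lemma rev_stepB m p c : (size p <= m.+1)%N ->
  rev_poly m.+1 ('X * p - c%:P * rev_poly m p) = rev_poly m p - (c^*)%:P * ('X * p).
Proof. by move=> hs; rewrite rev_sub rev_X rev_C rev_rev. Qed.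

Lemma rev_stepD m p c : (size p <= m.+1)%N ->
  rev_poly m.+1 ('X * p + c%:P * rev_poly m p) = rev_poly m p + (c^*)%:P * ('X * p).
Proof. by move=> hs; rewrite rev_add rev_X rev_C rev_rev. Qed.

Lemma size_rev m p : (size (rev_poly m p) <= m.+1)%N.
Proof. exact: size_poly. Qed.

Lemma size_Xp m p : (size p <= m.+1)%N -> (size ('X * p)%R <= m.+2)%N.
Proof.
move=> hs; apply: leq_trans (size_polyMleq _ _) _; rewrite size_polyX; lia.
Qed.

Lemma size_Crev m c p : (size (c%:P * rev_poly m p)%R <= m.+2)%N.
Proof.
apply: leq_trans (size_polyMleq _ _) _.
have := size_polyC_leq1 c; have := size_rev m p; lia.
Qed.

Lemma size_stepB m p c : (size p <= m.+1)%N ->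
  (size ('X * p - c%:P * rev_poly m p)%R <= m.+2)%N.
Proof.
move=> hs; apply: leq_trans (size_polyD _ _) _; rewrite size_polyN.
by rewrite geq_max size_Crev (@size_Xp m p hs).
Qed.

Lemma size_stepD m p c : (size p <= m.+1)%N ->
  (size ('X * p + c%:P * rev_poly m p)%R <= m.+2)%N.
Proof.
move=> hs; apply: leq_trans (size_polyD _ _) _.
by rewrite geq_max size_Crev (@size_Xp m p hs).
Qed.


Variable a : nat -> R[i].

Lemma size_Phi m : (size (Phi a m) <= m.+1)%N.
Proof. elim: m => [|m IH] /=; [by rewrite size_poly1|exact: size_stepB]. Qed.
Lemma size_Psi m : (size (Psi a m) <= m.+1)%N.
Proof. elim: m => [|m IH] /=; [by rewrite size_poly1|exact: size_stepD]. Qed.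
Lemma size_Phia k m : (size (Phi_assoc a k m) <= m.+1)%N.
Proof. elim: m => [|m IH] /=; [by rewrite size_poly1|exact: size_stepB]. Qed.
Lemma size_Psia k m : (size (Psi_assoc a k m) <= m.+1)%N.
Proof. elim: m => [|m IH] /=; [by rewrite size_poly1|exact: size_stepD]. Qed.

Lemma rev01 : rev_poly 0 (1 : {poly R[i]}) = 1.
Proof.
apply/polyP => i; rewrite coef_poly coef1; case: i => //=.
  by rewrite coef1 /= rmorph1.
by move=> n; rewrite coef1.
Qed.

Lemma Wid k : Phi a k * rev_poly k (Psi a k) + Psi a k * rev_poly k (Phi a k)
  = 2%:R * 'X^k * (\prod_(j < k) (1 - `|a j| ^+ 2))%:P.
Proof.
elim: k => [|k IH].
  by rewrite /= rev01 big_ord0 expr0 mulr1 !mulr1.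
rewrite [Phi a k.+1]/= [Psi a k.+1]/= rev_stepB ?size_Phi // rev_stepD ?size_Psi //.
rewrite conjCK.
transitivity ('X * (1 - (a k * (a k)^*))%:P *
  (Phi a k * rev_poly k (Psi a k) + Psi a k * rev_poly k (Phi a k))).
  rewrite polyCB polyCM polyC1; ring.
rewrite IH big_ord_recr /= polyCM normCK exprS; ring.
Qed.

End S.

Lemma step_alg (T : comNzRingType) (c p q ps qs P Q Ps Qs e11 e12 e21 e22 X A B : T) :
  c * p = P * e11+Q * e21 -> c * q = P * e12+Q * e22 -> c * ps = Ps * e11 + -Qs * e21 ->
  c* -qs = Ps * e12 + -Qs * e22 ->
  [/\ c* (X * p - A * ps) = (X * P - A * Ps) * e11 + (X * Q + A * Qs) * e21,
      c* (X * q + A * qs) = (X * P - A * Ps) * e12 + (X * Q+A * Qs) * e22,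
      c* (ps - B* (X * p)) = (Ps - B* (X * P)) * e11 + -(Qs + B* (X * Q)) * e21 &
      c* -(qs + B* (X * q)) = (Ps - B* (X * P)) * e12 + -(Qs + B* (X * Q)) * e22].
Proof.
move=> H1 H2 H3 H4; split; apply/eqP; rewrite -subr_eq0; apply/eqP.
- transitivity (X* (c * p - (P * e11+Q * e21)) - A* (c * ps - (Ps * e11 + -Qs * e21))); first ring.
  by rewrite H1 H3 !subrr !mulr0 subrr.
- transitivity (X* (c * q - (P * e12+Q * e22)) - A* (c* -qs - (Ps * e12 + -Qs * e22))); first ring.
  by rewrite H2 H4 !subrr !mulr0 subrr.
- transitivity ((c * ps - (Ps * e11 + -Qs * e21)) - B * X* (c * p - (P * e11+Q * e21))); first ring.
  by rewrite H1 H3 !subrr !mulr0 subrr.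
- transitivity ((c* -qs - (Ps * e12 + -Qs * e22)) - B * X* (c * q - (P * e12+Q * e22))); first ring.
  by rewrite H2 H4 !subrr !mulr0 subrr.
Qed.

Lemma mx22_mul (T : comNzRingType) (x y z w x' y' z' w' : T) :
  mx22 x y z w *m mx22 x' y' z' w' =
  mx22 (x * x'+y * z') (x * y'+y * w') (z * x'+w * z') (z * y'+w * w').
Proof.
apply/matrixP => i j; rewrite !mxE !big_ord_recr big_ord0 /= !mxE add0r.
by move: i j => [[|[|i]] Hi] [[|[|j]] Hj].
Qed.

Lemma mx22_scale (T : comNzRingType) (c x y z w : T) :
  c *: mx22 x y z w = mx22 (c * x) (c * y) (c * z) (c * w).
Proof.
apply/matrixP => i j; rewrite !mxE.
by move: i j => [[|[|i]] Hi] [[|[|j]] Hj].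
Qed.

Theorem theorem14 (R : realType) (a : nat -> R[i])
  (ha : forall m, `|a m| < 1) (k n : nat) (hk : (0 < k)%N) :
  (2%:R * 'X^k * (\prod_(j < k) (1 - `|a j| ^+ 2))%:P) *:
    mx22 (Phi_assoc a k n) (Psi_assoc a k n)
         (rev_poly n (Phi_assoc a k n)) (- rev_poly n (Psi_assoc a k n))
  = mx22 (Phi a (n + k)) (Psi a (n + k))
         (rev_poly (n + k) (Phi a (n + k))) (- rev_poly (n + k) (Psi a (n + k)))
    *m mx22 (rev_poly k (Psi a k) + Psi a k) (rev_poly k (Psi a k) - Psi a k)
            (rev_poly k (Phi a k) - Phi a k) (rev_poly k (Phi a k) + Phi a k).
Proof.
rewrite mx22_scale mx22_mul.
set c := _ * _ * _.
set e11 := _ + Psi a k; set e12 := _ - Psi a k.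
set e21 := _ - Phi a k; set e22 := _ + Phi a k.
suff [-> -> -> ->] : [/\ c * Phi_assoc a k n = Phi a (n + k) * e11 + Psi a (n + k) * e21,
  c * Psi_assoc a k n = Phi a (n + k) * e12 + Psi a (n + k) * e22,
  c * rev_poly n (Phi_assoc a k n) = rev_poly (n + k) (Phi a (n + k)) * e11
       + - rev_poly (n + k) (Psi a (n + k)) * e21 &
  c * - rev_poly n (Psi_assoc a k n) = rev_poly (n + k) (Phi a (n + k)) * e12
       + - rev_poly (n + k) (Psi a (n + k)) * e22] by [].
elim: n => [|n [H1 H2 H3 H4]].
  rewrite add0n /= rev01 /c -Wid /e11 /e12 /e21 /e22.
  split; ring.
rewrite addSn [Phi_assoc a k n.+1]/= [Psi_assoc a k n.+1]/= [Phi a _.+1]/= [Psi a _.+1]/=.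
rewrite rev_stepB ?size_Phia // rev_stepD ?size_Psia //.
rewrite rev_stepB ?size_Phi // rev_stepD ?size_Psi //.
- exact: step_alg.
- exact: size_Psia.
- exact: size_Psi.
Qed.
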